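(* For $n\ge2$, the family $\mathcal{K}_n$ consists of exactly $2^{\frac{(n-1)(n-2)}{2}}$ Bieberbach groups, and these groups are pairwise nonisomorphic.
   Context: Let $e_1,\dots,e_n$ be the canonical basis of $\mathbb{R}^n$. For $1\le i\le n-1$ let $C_i$ be the diagonal matrix with $-1$ in position $i$ and $1$ elsewhere, and $c_i=\tfrac12e_{i+1}+\sum_{j=1}^{i-1}c_{ji}e_j$ with $c_{ji}\in\{0,\tfrac12\}$. $\mathcal{K}_n$ is the set of subgroups of the Euclidean isometry group $I(\mathbb{R}^n)$ generated by $\{C_iL_{c_i}:1\le i\le n-1\}\cup\{L_{e_j}:1\le j\le n\}$, one for each choice of the parameters $c_{ji}$, $1\le j<i\le n-1$ (here $BL_b$ is $x\mapsto B(x+b)$). A Bieberbach group is a discrete, cocompact, torsion-free subgroup of $I(\mathbb{R}^n)$. *)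

(* Defs.v *)
From HB Require Import structures.
From mathcomp Require Import all_boot all_order all_algebra.
From mathcomp Require Import reals.
Set Implicit Arguments. Unset Strict Implicit. Unset Printing Implicit Defensive.
Import Order.TTheory GRing.Theory Num.Theory.
Local Open Scope ring_scope.

Section Defs.
Variables (R : realType) (n : nat).

(* An affine map x |-> A x + t of R^n (column vectors), encoded as (A, t). *)
Definition aff := ('M[R]_n * 'cV[R]_n)%type.

Definition aff_act (g : aff) (x : 'cV[R]_n) : 'cV[R]_n := g.1 *m x + g.2.
Definition aff_id : aff := (1%:M, 0).
(* composition: (aff_mul g h) x = g (h x) *)
Definition aff_mul (g h : aff) : aff := (g.1 *m h.1, g.1 *m h.2 + g.2).
Definition aff_inv (g : aff) : aff := (invmx g.1, - (invmx g.1 *m g.2)).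
Definition aff_pow (g : aff) (k : nat) : aff := iter k (aff_mul g) aff_id.

(* Elements of I(R^n): A orthogonal (every Euclidean isometry is of this form). *)
Definition is_isometry (g : aff) : Prop := g.1^T *m g.1 = 1%:M.

(* L_b : x |-> x + b ;  B L_b : x |-> B (x + b) = B x + B b *)
Definition transl (b : 'cV[R]_n) : aff := (1%:M, b).
Definition lin_transl (B : 'M[R]_n) (b : 'cV[R]_n) : aff := (B, B *m b).

Definition sqnorm (x : 'cV[R]_n) : R := \sum_k (x k 0) ^+ 2.

Inductive generated (S : aff -> Prop) : aff -> Prop :=
  | gen_base g : S g -> generated S g
  | gen_id : generated S aff_id
  | gen_mul g h : generated S g -> generated S h -> generated S (aff_mul g h)
  | gen_inv g : generated S g -> generated S (aff_inv g).

(* discrete: the identity is isolated for the compact-open topology, whose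
   basic neighbourhoods of the identity are {g | |g x - x| < eps for |x| <= r} *)
Definition discrete (G : aff -> Prop) : Prop :=
  exists r eps : R, 0 < r /\ 0 < eps /\
    forall g, G g -> (forall x, sqnorm x <= r -> sqnorm (aff_act g x - x) < eps) ->
      g = aff_id.

(* cocompact: R^n / G is compact, i.e. some closed ball meets every orbit *)
Definition cocompact (G : aff -> Prop) : Prop :=
  exists r : R, forall x, exists g, G g /\ sqnorm (aff_act g x) <= r.

Definition torsion_free (G : aff -> Prop) : Prop :=
  forall g k, G g -> (0 < k)%N -> aff_pow g k = aff_id -> g = aff_id.

Definition Bieberbach (G : aff -> Prop) : Prop :=
  (forall g, G g -> is_isometry g) /\ discrete G /\ cocompact G /\ torsion_free G.

Definition isomorphic (G H : aff -> Prop) : Prop :=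
  exists f : aff -> aff,
    (forall g, G g -> H (f g)) /\
    (forall g h, G g -> G h -> f (aff_mul g h) = aff_mul (f g) (f h)) /\
    (forall g h, G g -> G h -> f g = f h -> g = h) /\
    (forall h, H h -> exists g, G g /\ f g = h).

(* Parameters c_{ji}, 1 <= j < i <= n-1, written 0-based: j' = j-1, i' = i-1,
   so 0 <= j' < i' <= n-2.  [true] stands for 1/2, [false] for 0. *)
Definition idx_ok (p : 'I_n * 'I_n) : bool := (p.1 < p.2)%N && (p.2.+1 < n)%N.
Definition Param := {ffun {p : 'I_n * 'I_n | idx_ok p} -> bool}.

Definition cval (c : Param) (j i : 'I_n) : R :=
  if @insub _ idx_ok {p : 'I_n * 'I_n | idx_ok p} (j, i) is Some p
  then (if c p then 2^-1 else 0) else 0.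

Definition evec (k : 'I_n) : 'cV[R]_n := \col_l (l == k)%:R.

Definition Cmat (i : 'I_n) : 'M[R]_n :=
  \matrix_(k, l) (if k == l then (if k == i then -1 else 1) else 0).

Definition cvec (c : Param) (i : 'I_n) : 'cV[R]_n :=
  \col_k (if (k : nat) == i.+1 then 2^-1 else if (k < i)%N then cval c k i else 0).

Definition Kgens (c : Param) (g : aff) : Prop :=
  (exists i : 'I_n, (i.+1 < n)%N /\ g = lin_transl (Cmat i) (cvec c i)) \/
  (exists j : 'I_n, g = transl (evec j)).

Definition Kgroup (c : Param) : aff -> Prop := generated (Kgens c).

End Defs.

(* Main.v *)
Require Import Defs.
From HB Require Import structures.
From mathcomp Require Import all_boot all_order all_algebra.
From mathcomp Require Import reals.
From mathcomp Require Import ring lra zify.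
Set Implicit Arguments. Unset Strict Implicit. Unset Printing Implicit Defensive.

Lemma sum_lt_ord n (b : nat) : (b <= n)%N -> (\sum_(a < n) (a < b)%N)%N = b.
Proof.
move=> hb; rewrite -(big_mkord xpredT (fun a => nat_of_bool (a < b)%N)).
rewrite (@big_cat_nat _ _ _ b 0 n) /=; [|by []|exact: hb].
have -> : (\sum_(b <= i < n) (i < b)%N = 0)%N.
  rewrite big1_seq // => i /andP[_]; rewrite mem_index_iota => /andP[h _].
  by rewrite ltnNge h.
rewrite addn0 (eq_big_seq (fun _ => 1%N)); last first.
  by move=> i; rewrite mem_index_iota => /andP[_ ->].
by rewrite sum1_size size_iota subn0.
Qed.

Lemma card_param n : (2 <= n)%N -> #|{: Param n}| = 2 ^ ((n.-1 * n.-2) %/ 2).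
Proof.
move=> hn; rewrite card_ffun card_bool card_sig; congr (_ ^ _).
rewrite divn2 -bin2 -bin2_sum -sum1_card big_mkcond /=.
rewrite -(pair_bigA _ (fun a b => if idx_ok (a, b) then 1%N else 0%N)) /=.
rewrite exchange_big /=.
rewrite (eq_bigr (fun b : 'I_n => if (b.+1 < n)%N then nat_of_ord b else 0%N)); last first.
  move=> b _; rewrite /idx_ok /=.
  case: ifP => hb; last by rewrite big1 // => a _; rewrite andbF.
  rewrite (eq_bigr (fun a : 'I_n => nat_of_bool (a < b)%N)); last first.
    by move=> a _; rewrite andbT; case: (a < b)%N.
  exact: sum_lt_ord (ltnW (ltn_ord b)).
case: n hn => [//|m] _ /=.
rewrite -(big_mkord xpredT (fun b => if (b.+1 < m.+1)%N then b else 0%N)).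
rewrite big_nat_recr //= ltnn addn0.
by apply: eq_big_nat => i /andP[_ h]; rewrite ltnS h.
Qed.

Import Order.TTheory GRing.Theory Num.Theory.
Local Open Scope ring_scope.

Section Basic.
Variables (R : realType) (n : nat).

Definition sg (b : bool) : R := if b then -1 else 1.
Definition dmat (s : 'I_n -> bool) : 'M[R]_n :=
  \matrix_(k, l) (if k == l then sg (s k) else 0).

Lemma dmatE s p (A : 'M[R]_(n, p)) i j : (dmat s *m A) i j = sg (s i) * A i j.
Proof.
rewrite !mxE (bigD1 i) //= big1 ?addr0; first by rewrite mxE eqxx.
by move=> k /negbTE hk; rewrite mxE eq_sym hk mul0r.
Qed.

Lemma sgM a b : sg a * sg b = sg (a (+) b).
Proof. by case: a; case: b; rewrite /sg /= ?mulN1r ?opprK ?mulr1 ?mul1r. Qed.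

Lemma dmat_mul s s' : dmat s *m dmat s' = dmat (fun k => s k (+) s' k).
Proof.
apply/matrixP => i j; rewrite dmatE !mxE.
by case: (i == j); rewrite ?mulr0 // sgM.
Qed.

Lemma dmat0 : dmat (fun _ => false) = 1%:M.
Proof. by apply/matrixP => i j; rewrite !mxE; case: (i == j). Qed.

Lemma dmat_ext s s' : s =1 s' -> dmat s = dmat s'.
Proof. by move=> h; apply/matrixP => i j; rewrite !mxE h. Qed.

Lemma dmat_sq s : dmat s *m dmat s = 1%:M.
Proof. by rewrite dmat_mul -dmat0; apply: dmat_ext => k; rewrite addbb. Qed.

Lemma dmat_tr s : (dmat s)^T = dmat s.
Proof.
apply/matrixP => i j; rewrite !mxE eq_sym.
by case: eqP => // ->.
Qed.

Lemma dmat_inv s : invmx (dmat s) = dmat s.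
Proof.
have [hu _] := mulmx1_unit (dmat_sq s).
by rewrite -{1}(mulmx1 (invmx (dmat s))) -(dmat_sq s) mulKmx.
Qed.

Lemma sg_eq1 b : (sg b == 1) = ~~ b.
Proof.
case: b => //=; last by rewrite eqxx.
apply/negbTE/eqP => h; lra.
Qed.

Lemma dmat_inj s s' : dmat s = dmat s' -> s =1 s'.
Proof.
move=> h k; have := congr1 (fun M : 'M[R]_n => M k k) h; rewrite !mxE eqxx.
move=> /eqP; case: (s k); case: (s' k) => //= /eqP; lra.
Qed.

Lemma Cmat_dmat i : Cmat R i = dmat (fun k => k == i).
Proof. by apply/matrixP => k l; rewrite !mxE. Qed.

End Basic.

Section Inv.
Variables (R : realType) (n : nat) (c : Param n).

Local Notation isint x := (x \is a @Num.int R).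

Lemma cvec_half m k : cvec R c m k 0 = 2^-1 \/ cvec R c m k 0 = 0.
Proof.
rewrite mxE; case: ifP => _; first by left.
case: ifP => _; last by right.
rewrite /cval; case: insub => [p|]; last by right.
by case: (c p); [left|right].
Qed.

Lemma half_int (x : R) : x = 2^-1 \/ x = 0 -> isint (2 * x).
Proof.
case=> ->; last by rewrite mulr0 int_num0.
by rewrite mulfV ?int_num1 // pnatr_eq0.
Qed.

Lemma cvec2 m k : isint (2 * cvec R c m k 0).
Proof. exact/half_int/cvec_half. Qed.

Definition cs (s : 'I_n -> bool) (k : 'I_n) : R := \sum_m (s m)%:R * cvec R c m k 0.

Lemma natr_bool_int (b : bool) : isint (b%:R : R).
Proof. by case: b; rewrite ?int_num0 ?int_num1. Qed.

Lemma cs2 s k : isint (2 * cs s k).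
Proof.
rewrite /cs mulr_sumr; apply: rpred_sum => m _.
by rewrite mulrCA; apply: rpredM; [exact: natr_bool_int|exact: cvec2].
Qed.

Lemma cs_xor s s' k :
  isint (cs s k + cs s' k - cs (fun m => s m (+) s' m) k).
Proof.
have -> : cs s k + cs s' k - cs (fun m => s m (+) s' m) k =
   \sum_m (s m && s' m)%:R * (2 * cvec R c m k 0).
  rewrite /cs -big_split -sumrB /=; apply: eq_bigr => m _.
  by case: (s m); case: (s' m) => /=; ring.
apply: rpred_sum => m _; apply: rpredM; [exact: natr_bool_int|exact: cvec2].
Qed.

Lemma sgm1_int b (x : R) : isint (2 * x) -> isint ((sg R b - 1) * x).
Proof.
move=> h; case: b; rewrite /sg; last by rewrite subrr mul0r int_num0.
have -> : (-1 - 1) * x = - (2 * x) by ring.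
by rewrite rpredN.
Qed.

Lemma sgp1_int b (x : R) : isint (2 * x) -> isint ((sg R b + 1) * x).
Proof.
move=> h; case: b; rewrite /sg; first by rewrite addNr mul0r int_num0.
by have -> : (1 + 1) * x = 2 * x by ring.
Qed.

Definition Inv (g : aff R n) := exists s : 'I_n -> bool,
  (forall k, s k -> (k.+1 < n)%N) /\ g.1 = dmat R s /\
  forall k, isint (g.2 k 0 - cs s k).

Lemma cs0 k : cs (fun _ => false) k = 0.
Proof. by rewrite /cs big1 // => m _; rewrite mul0r. Qed.

Lemma Inv_id : Inv (aff_id R n).
Proof.
exists (fun _ => false); split => //; split; first by rewrite dmat0.
by move=> k; rewrite cs0 mxE subr0 int_num0.
Qed.

Lemma Cvec_fix i : Cmat R i *m cvec R c i = cvec R c i.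
Proof.
apply/matrixP => k l; rewrite Cmat_dmat dmatE; rewrite /sg.
case: eqP => [->|_]; last by rewrite mul1r.
rewrite (ord1 l) !mxE.
have -> : (i == i.+1 :> nat) = false by rewrite eqn_leq ltnn andbF.
by rewrite ltnn mulr0.
Qed.

Lemma Inv_gen g : Kgens c g -> Inv g.
Proof.
case=> [[i [hi ->]]|[j ->]].
  exists (fun k => k == i); split; first by move=> k /eqP ->.
  split; first by rewrite /= Cmat_dmat.
  move=> k; rewrite /= Cvec_fix.
  have -> : cs (fun k => k == i) k = cvec R c i k 0.
    rewrite /cs (bigD1 i) //= eqxx mul1r big1 ?addr0 // => m /negbTE hm.
    by rewrite hm mul0r.
  by rewrite subrr int_num0.
exists (fun _ => false); split => //; split; first by rewrite dmat0.
move=> k; rewrite cs0 subr0 /= mxE; exact: natr_bool_int.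
Qed.

Lemma Inv_mul g h : Inv g -> Inv h -> Inv (aff_mul g h).
Proof.
case: g => D t; case: h => D' t' [s [hs [/= -> ht]]] [s' [hs' [/= -> ht']]].
exists (fun k => s k (+) s' k); split.
  by move=> k; case: (s k) (hs k) (hs' k); case: (s' k) => //= _ ->.
split; first by rewrite /= dmat_mul.
move=> k /=; rewrite mxE dmatE.
have := ht k; have := ht' k; have := cs_xor s s' k.
have := sgm1_int (s k) (cs2 s' k).
set a := t k 0; set b := t' k 0; set x := cs s k; set y := cs s' k.
set z := cs _ k; set e := sg R (s k) => h1 h2 h3 h4.
have -> : e * b + a - z = e * (b - y) + (a - x) + (e - 1) * y + (x + y - z) by ring.
apply: rpredD; [apply: rpredD; [apply: rpredD|]|] => //.
apply: rpredM => //; rewrite /e /sg; case: (s k); rewrite ?rpredN int_num1 //.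
Qed.

Lemma Inv_inv g : Inv g -> Inv (aff_inv g).
Proof.
case: g => D t [s [hs [/= -> ht]]].
exists s; split => //; split; first by rewrite /= dmat_inv.
move=> k /=; rewrite dmat_inv mxE dmatE.
have := ht k; have := sgp1_int (s k) (cs2 s k).
set a := t k 0; set x := cs s k; set e := sg R (s k) => h1 h2.
have -> : - (e * a) - x = - e * (a - x) - (e + 1) * x by ring.
apply: rpredB => //; apply: rpredM => //.
rewrite /e /sg; case: (s k); rewrite ?opprK ?rpredN int_num1 //.
Qed.

Lemma Inv_K g : Kgroup c g -> Inv g.
Proof.
elim=> {g} [g /Inv_gen //| |g h _ ? _ ?|g _ ?]; first exact: Inv_id.
  exact: Inv_mul.
exact: Inv_inv.
Qed.

End Inv.

Section Bieb.
Variables (R : realType) (n : nat) (c : Param n).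
Local Notation isint x := (x \is a @Num.int R).

Lemma intv_ind (P : 'cV[R]_n -> Prop) :
  P 0 -> (forall a b, P a -> P b -> P (a + b)) -> (forall a, P a -> P (- a)) ->
  (forall k, P (evec R k)) -> forall v : 'cV[R]_n, (forall k, isint (v k 0)) -> P v.
Proof.
move=> P0 PD PN Pe v hv.
have Pnat (m : nat) k : P (m%:R *: evec R k).
  elim: m => [|m IH]; first by rewrite scale0r.
  by rewrite mulrS scalerDl scale1r; apply: PD.
have Pint (z : int) k : P (z%:~R *: evec R k).
  case: z => m; first exact: Pnat.
  by rewrite NegzE mulrNz scaleNr; apply: PN; exact: Pnat.
have -> : v = \sum_k (v k 0) *: evec R k.
  apply/matrixP => i j; rewrite (ord1 j) summxE (bigD1 i) //= big1 ?addr0.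
    by rewrite !mxE eqxx mulr1.
  by move=> k /negbTE hk; rewrite !mxE eq_sym hk mulr0.
apply: (big_ind P) => // k _.
by have /intrP [z ->] := hv k; exact: Pint.
Qed.

Lemma transl_mul (a b : 'cV[R]_n) : aff_mul (transl a) (transl b) = transl (a + b).
Proof. by rewrite /aff_mul /transl /= mul1mx mul1mx addrC. Qed.

Lemma transl_inv (a : 'cV[R]_n) : aff_inv (transl a) = transl (- a).
Proof. by rewrite /aff_inv /transl /= invmx1 mul1mx. Qed.

Lemma K_transl (v : 'cV[R]_n) : (forall k, isint (v k 0)) -> Kgroup c (transl v).
Proof.
apply: (intv_ind (P := fun v => Kgroup c (transl v))).
- exact: gen_id.
- by move=> a b ha hb; rewrite -transl_mul; apply: gen_mul.
- by move=> a ha; rewrite -transl_inv; apply: gen_inv.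
- by move=> k; apply: gen_base; right; exists k.
Qed.

Lemma sq_le_sqnorm (x : 'cV[R]_n) k : x k 0 ^+ 2 <= sqnorm x.
Proof.
rewrite /sqnorm (bigD1 k) //= lerDl; apply: sumr_ge0 => i _; exact: sqr_ge0.
Qed.

Lemma sqnorm0 : @sqnorm R n 0 = 0.
Proof. by rewrite /sqnorm big1 // => i _; rewrite mxE expr0n. Qed.

Lemma sqnorm_e (k : 'I_n) : sqnorm (evec R k) = 1.
Proof.
rewrite /sqnorm (bigD1 k) //= big1 ?addr0; first by rewrite mxE eqxx expr1n.
by move=> i /negbTE hi; rewrite mxE hi expr0n.
Qed.

Lemma act_dmat s t (x : 'cV[R]_n) k :
  aff_act (dmat R s, t) x k 0 = sg R (s k) * x k 0 + t k 0.
Proof. by rewrite /aff_act mxE dmatE. Qed.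

Lemma cs_false s k : s =1 xpred0 -> cs R c s k = 0.
Proof. by move=> h; rewrite /cs big1 // => m _; rewrite h mul0r. Qed.

Lemma int_sq_small (x : R) : isint x -> x ^+ 2 < 1 -> x = 0.
Proof.
move=> hx h; apply/eqP; apply/negPn/negP => hx0.
have := sqr_intr_ge1 hx hx0; lra.
Qed.

Lemma K_isometry (g : aff R n) : Kgroup c g -> is_isometry g.
Proof.
move=> /(Inv_K) [s [_ [hD _]]]; by rewrite /is_isometry hD dmat_tr dmat_sq.
Qed.

Lemma K_discrete : discrete (@Kgroup R n c).
Proof.
exists 1, 4^-1; split; first lra; split; first lra.
move=> [D t] hg H; have [s [hs [/= hD ht]]] := Inv_K hg; subst D.
have h0 : sqnorm t < 4^-1.
  have := H 0; rewrite sqnorm0 /aff_act /= mulmx0 add0r subr0; apply; lra.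
have ht2 k : t k 0 ^+ 2 < 4^-1 := le_lt_trans (sq_le_sqnorm t k) h0.
case: (pickP s) => [k hk|hs0].
  have h1 : sqnorm (aff_act (dmat R s, t) (evec R k) - evec R k) < 4^-1.
    by apply: H; rewrite sqnorm_e.
  have := le_lt_trans (sq_le_sqnorm _ k) h1.
  rewrite mxE act_dmat hk /sg !mxE eqxx mulr1 => h2.
  exfalso; move: h2; rewrite /= => h2; have := ht2 k; nra.
have htk k : t k 0 = 0.
  apply: int_sq_small; last by have := ht2 k; lra.
  by have := ht k; rewrite cs_false // subr0.
rewrite /aff_id (@dmat_ext R n s (fun _ => false)) // dmat0; congr pair.
by apply/matrixP => i j; rewrite (ord1 j) htk mxE.
Qed.

Lemma K_cocompact : cocompact (@Kgroup R n c).
Proof.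
exists n%:R => x.
pose v : 'cV[R]_n := \col_k ((Num.floor (x k 0))%:~R).
exists (transl (- v)); split.
  by apply: K_transl => k; rewrite !mxE rpredN intr_int.
rewrite /sqnorm; apply: (@le_trans _ _ (\sum_(k < n) (1:R))); last first.
  by rewrite sumr_const card_ord.
apply: ler_sum => k _; rewrite /aff_act /transl /= mul1mx !mxE.
have h1 := floor_le (x k 0); have h2 := floorD1_gt (x k 0).
rewrite intrD in h2; nra.
Qed.

Lemma pow_coord (s : 'I_n -> bool) (t : 'cV[R]_n) l j : s l = false ->
  (aff_pow (dmat R s, t) j).2 l 0 = j%:R * t l 0.
Proof.
move=> hl; elim: j => [|j IH]; first by rewrite /= mxE mul0r.
rewrite /= mxE dmatE hl /sg -/(aff_pow _ j) IH mulrS; ring.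
Qed.

Lemma K_torsion_free : torsion_free (@Kgroup R n c).
Proof.
move=> [D t] k hg hk hpow; have [s [hs [/= hD ht]]] := Inv_K hg; subst D.
have tz l : s l = false -> t l 0 = 0.
  move=> hl; have := congr1 (fun g : aff R n => g.2 l 0) hpow.
  rewrite /= pow_coord // mxE => /eqP; rewrite mulf_eq0 pnatr_eq0.
  by case: k hk {hpow} => // k' _ /= /eqP.
case: (pickP s) => [i hi|hs0].
  case: (@arg_maxnP _ i s (fun j => nat_of_ord j) hi) => m hm hmax.
  have hm1 := hs m hm; pose l := Ordinal hm1.
  have hl : s l = false.
    by apply/negbTE/negP => /hmax; rewrite /= ltnn.
  have hcs : cs R c s l = 2^-1.
    rewrite /cs (bigD1 m) //= hm mul1r big1 ?addr0.
      by rewrite mxE /= eqxx.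
    move=> m' hm'; case hs' : (s m'); last by rewrite mul0r.
    have := hmax m' hs' => hle.
    rewrite mxE /=; case: eqP => [/eqP|_].
      by rewrite eqSS => /eqP/val_inj he; move: hm'; rewrite he eqxx.
    by rewrite ltnNge (leq_trans hle) // mulr0.
  have := ht l; rewrite hcs tz // sub0r => hh.
  exfalso; have := int_sq_small hh; lra.
rewrite /aff_id (@dmat_ext R n s (fun _ => false)) // dmat0; congr pair.
by apply/matrixP => a b; rewrite (ord1 b) tz ?hs0 // mxE.
Qed.

End Bieb.

Section Gen.
Variables (R : realType) (n : nat).
Local Notation isint x := (x \is a @Num.int R).

Definition sq (g : aff R n) := aff_mul g g.

Lemma mul_id : aff_mul (aff_id R n) (aff_id R n) = aff_id R n.
Proof. by rewrite /aff_mul /aff_id /= mul1mx mulmx0 addr0. Qed.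

Lemma transl0 : transl (0 : 'cV[R]_n) = aff_id R n.
Proof. by []. Qed.

Lemma cs_ext (c : Param n) s s' k : s =1 s' -> cs R c s k = cs R c s' k.
Proof. by move=> h; apply: eq_bigr => m _; rewrite h. Qed.

Lemma K_one_int (c : Param n) (g : aff R n) : Kgroup c g -> g.1 = 1%:M ->
  forall k, isint (g.2 k 0).
Proof.
move=> /Inv_K [s [_ [hD ht]]] h1 k.
have hs : s =1 xpred0.
  by move=> m; rewrite (@dmat_inj R n s (fun _ => false)) // -hD h1 dmat0.
by have := ht k; rewrite cs_false // subr0.
Qed.

Lemma charL (c : Param n) (g : aff R n) : Kgroup c g ->
  (g.1 = 1%:M <-> forall h, Kgroup c h -> aff_mul g (sq h) = aff_mul (sq h) g).
Proof.
move=> hg; split.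
  case: g hg => D t hg /= -> h /Inv_K [s [_ [hD _]]].
  case: h hD => M u /= ->.
  by rewrite /sq /aff_mul /= dmat_sq !mul1mx addrC.
move=> H; have [s [_ [hD _]]] := Inv_K hg.
suff hs : s =1 xpred0 by rewrite hD (@dmat_ext R n s (fun _ => false)) // dmat0.
move=> k; apply/negbTE/negP => hk.
have := H (transl (evec R k)) (gen_base (or_intror (ex_intro _ k erefl))).
rewrite /sq transl_mul; case: g hg hD H => D t hg /= -> _.
move=> /(congr1 (fun g : aff R n => g.2 k 0)) /=.
rewrite mul1mx [in LHS]mxE dmatE !mxE eqxx hk /sg /= => e; lra.
Qed.

Lemma pm1_int (a b : R) : isint a -> isint b -> a * b = 1 -> a = 1 \/ a = -1.
Proof.
move=> ha hb hab.
have a0 : a != 0 by apply/eqP => h; move: hab; rewrite h mul0r => /eqP; rewrite eq_sym oner_eq0.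
have b0 : b != 0 by apply/eqP => h; move: hab; rewrite h mulr0 => /eqP; rewrite eq_sym oner_eq0.
have h1 := sqr_intr_ge1 ha a0; have h2 := sqr_intr_ge1 hb b0.
have h3 : a ^+ 2 * b ^+ 2 = 1 by rewrite -exprMn hab expr1n.
have h4 : (a - 1) * (a + 1) = 0 by nra.
by move/eqP: h4; rewrite mulf_eq0 => /orP [/eqP h|/eqP h]; [left|right]; lra.
Qed.

Lemma half_not_int : ~ isint (2^-1 : R).
Proof. by move=> /int_sq_small h; have := h ltac:(lra); lra. Qed.

Lemma mhalf_not_int : ~ isint (- 2^-1 : R).
Proof. by rewrite rpredN; exact: half_not_int. Qed.

End Gen.

Section NonIso.
Variables (R : realType) (n : nat) (c c' : Param n) (f : aff R n -> aff R n).
Local Notation isint x := (x \is a @Num.int R).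
Local Notation G := (@Kgroup R n c).
Local Notation G' := (@Kgroup R n c').
Hypothesis fG : forall g, G g -> G' (f g).
Hypothesis fM : forall g h, G g -> G h -> f (aff_mul g h) = aff_mul (f g) (f h).
Hypothesis fI : forall g h, G g -> G h -> f g = f h -> g = h.
Hypothesis fS : forall h, G' h -> exists g, G g /\ f g = h.

Lemma mxDE p q (A B : 'M[R]_(p, q)) i j : (A + B) i j = A i j + B i j.
Proof. by rewrite mxE. Qed.

Lemma Kid : G (aff_id R n). Proof. exact: gen_id. Qed.

Lemma f_id : f (aff_id R n) = aff_id R n.
Proof.
have e := fM Kid Kid; rewrite mul_id in e.
have [s [_ [hD _]]] := Inv_K (fG Kid).
case E : (f (aff_id R n)) e hD => [M t] e /= hM; subst M.
move: e; rewrite /aff_mul /= => [[e1 e2]].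
rewrite dmat_sq in e1.
have ht : t = 0.
  have := congr1 (fun v => v - t) e2; rewrite e1 mul1mx addrK subrr => ->//.
by rewrite /aff_id ht e1.
Qed.

Lemma fL g : G g -> (g.1 = 1%:M <-> (f g).1 = 1%:M).
Proof.
move=> hg; split.
  move=> /(charL hg) H; apply/(charL (fG hg)) => h' /fS [h [hh <-]].
  rewrite /sq -!fM //; try exact: gen_mul.
  by rewrite H.
move=> /(charL (fG hg)) H; apply/(charL hg) => h hh.
apply: fI; try (by apply: gen_mul => //; apply: gen_mul).
rewrite /sq !fM //; try exact: gen_mul.
by have := H _ (fG hh); rewrite /sq => ->.
Qed.

Lemma Ke k : G (transl (evec R k)).
Proof. by apply: gen_base; right; exists k. Qed.

Definition w k : 'cV[R]_n := (f (transl (evec R k))).2.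

Lemma fTe k : f (transl (evec R k)) = transl (w k).
Proof.
have := (fL (Ke k)).1 erefl; rewrite /w.
by case: (f _) => M u /= ->.
Qed.

Definition W : 'M[R]_n := \matrix_(l, k) w k l 0.

Lemma W_e k : W *m evec R k = w k.
Proof.
apply/matrixP => l j; rewrite (ord1 j) !mxE (bigD1 k) //= big1 ?addr0.
  by rewrite !mxE eqxx mulr1.
by move=> m /negbTE hm; rewrite !mxE hm mulr0.
Qed.

Lemma fT (v : 'cV[R]_n) : (forall k, isint (v k 0)) -> G (transl v) /\ f (transl v) = transl (W *m v).
Proof.
apply: (intv_ind (P := fun v => G (transl v) /\ f (transl v) = transl (W *m v))).
- by rewrite mulmx0 transl0 f_id; split => //; exact: gen_id.
- move=> a b [ha fa] [hb fb]; rewrite -transl_mul; split; first exact: gen_mul.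
  by rewrite fM // fa fb transl_mul mulmxDr.
- move=> a [ha fa]; rewrite -transl_inv; split; first exact: gen_inv.
  have e := fM (gen_inv ha) ha.
  rewrite transl_inv transl_mul addNr transl0 f_id fa in e.
  rewrite transl_inv; case E : (f (transl (- a))) e => [M u].
  rewrite /aff_mul /aff_id /transl /= mulmx1 => [[eM e2]].
  rewrite -eM mul1mx in e2; rewrite -eM mulmxN; congr pair.
  by rewrite -[u](addKr (W *m a)) -e2 addr0.
- by move=> k; rewrite W_e fTe; split => //; exact: Ke.
Qed.

Definition ai (i : 'I_n) : aff R n := lin_transl (Cmat R i) (cvec R c i).

Lemma Kai (i : 'I_n) : (i.+1 < n)%N -> G (ai i).
Proof. by move=> hi; apply: gen_base; left; exists i. Qed.

Definition T (i l : 'I_n) : bool := (f (ai i)).1 l l != 1.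

Lemma T_inv (i : 'I_n) : (i.+1 < n)%N -> exists s t, f (ai i) = (dmat R s, t) /\ T i =1 s /\
   (forall k, s k -> (k.+1 < n)%N) /\ (forall k, isint (t k 0 - cs R c' s k)).
Proof.
move=> hi; have [s [hs [hD ht]]] := Inv_K (fG (Kai hi)).
exists s, (f (ai i)).2; split; first by rewrite -hD; case: (f _).
split => //; move=> l; rewrite /T hD mxE eqxx sg_eq1 negbK //.
Qed.

Definition Pat (k l : 'I_n) := forall j : 'I_n, (j.+1 < n)%N -> T j l = (j == k).

Lemma Cmat_e (j k : 'I_n) : Cmat R j *m evec R k = if j == k then - evec R k else evec R k.
Proof.
case: (eqVneq j k) => [<-|hjk]; apply/matrixP => l m; rewrite Cmat_dmat dmatE /sg !mxE.
  by case: (l == j); rewrite ?mulN1r ?mul1r ?mulr0 ?oppr0.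
case: (eqVneq l k) => [->|h]; first by rewrite eq_sym (negbTE hjk) mul1r.
by rewrite mulr0.
Qed.

Lemma ai_eq (i : 'I_n) : ai i = (Cmat R i, cvec R c i).
Proof. by rewrite /ai /lin_transl Cvec_fix. Qed.

Lemma PatA (k l : 'I_n) : w k l 0 != 0 -> Pat k l.
Proof.
move=> hw j hj; have [s [t [Ef [hT _]]]] := T_inv hj; rewrite hT.
case: (eqVneq j k) => [ejk|hjk].
  subst k; rewrite ?eqxx.
  have rel : aff_mul (transl (evec R j)) (aff_mul (ai j) (transl (evec R j))) = ai j.
    rewrite ai_eq /aff_mul /transl /= mulmx1 mul1mx Cmat_e eqxx mul1mx.
    by rewrite addrAC addNr add0r.
  have := congr1 f rel; rewrite fM ?fM //; try exact: Kai; try exact: Ke.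
    2: by apply: gen_mul; [exact: Kai|exact: Ke].
  rewrite fTe Ef /aff_mul /transl /= mul1mx => [[_ e]].
  have := congr1 (fun v : 'cV[R]_n => v l 0) e.
  rewrite mul1mx !mxDE dmatE /sg; case: (s l) => // h.
  by exfalso; move/eqP: hw; apply; lra.
have rel : aff_mul (ai j) (transl (evec R k)) = aff_mul (transl (evec R k)) (ai j).
  rewrite ai_eq /aff_mul /transl /= mulmx1 mul1mx Cmat_e (negbTE hjk) mul1mx.
  by rewrite addrC.
have := congr1 f rel; rewrite !fM; try exact: Kai; try exact: Ke.
rewrite fTe Ef /aff_mul /transl /= mul1mx => [[_ e]].
have := congr1 (fun v : 'cV[R]_n => v l 0) e.
rewrite mul1mx !mxDE dmatE /sg; case: (s l) => // h.
by exfalso; move/eqP: hw; apply; lra.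
Qed.

Lemma Pat_uniq (k k' l : 'I_n) : Pat k l -> Pat k' l -> k = k'.
Proof.
move=> h1 h2; case hk: (k.+1 < n)%N.
  by have := h2 k hk; rewrite h1 // eqxx => /esym/eqP.
case hk': (k'.+1 < n)%N.
  by have := h1 k' hk'; rewrite h2 // eqxx => /esym/eqP.
apply: val_inj; move: hk hk'; have := ltn_ord k; have := ltn_ord k'.
move=> a b /negbT e1 /negbT e2; rewrite -leqNgt in e1; rewrite -leqNgt in e2.
apply/eqP; rewrite eqn_leq; apply/andP; split.
  by rewrite -ltnS (leq_trans b e2).
by rewrite -ltnS (leq_trans a e1).
Qed.

Lemma w_int k : forall l, isint (w k l 0).
Proof. exact: (K_one_int (fG (Ke k)) ((fL (Ke k)).1 erefl)). Qed.

Lemma row (l : 'I_n) : exists k, Pat k l /\ (w k l 0 = 1 \/ w k l 0 = -1) /\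
  forall k', k' != k -> w k' l 0 = 0.
Proof.
have hel : forall k, isint (evec R l k 0) by move=> k; rewrite mxE natr_bool_int.
have [x [hx fx]] := fS (@K_transl R n c' (evec R l) hel).
have hx1 : x.1 = 1%:M by apply/(fL hx); rewrite fx.
have hxi := K_one_int hx hx1.
have ex : x = transl x.2 by case: x hx fx hx1 {hxi} => M u /= _ _ ->.
have [_ fv] := fT hxi; rewrite -ex fx in fv.
have hsum : \sum_k w k l 0 * x.2 k 0 = 1.
  have := congr1 (fun g : aff R n => g.2 l 0) fv; rewrite /= !mxE eqxx => E.
  by rewrite [RHS](_ : 1 = true%:R) // E; apply: eq_bigr => k _; rewrite ?mxE.
case: (pickP (fun k => w k l 0 * x.2 k 0 != 0)) => [k hk|h0]; last first.
  exfalso; move: hsum; rewrite big1 => [/eqP|k _]; first by rewrite eq_sym oner_eq0.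
  by apply/eqP; have := h0 k => /= /negbFE.
have hw : w k l 0 != 0 by move: hk; rewrite mulf_eq0 negb_or => /andP[].
have hP := PatA hw.
have hz : forall k', k' != k -> w k' l 0 = 0.
  move=> k' hk'; apply/eqP; apply/negPn/negP => hw'.
  by move: hk'; rewrite (Pat_uniq (PatA hw') hP) eqxx.
exists k; split => //; split => //.
apply: (pm1_int (w_int k l) (hxi k)).
rewrite (bigD1 k) //= big1 ?addr0 in hsum => // k' hk'.
by rewrite hz // mul0r.
Qed.

Lemma SQ (i : 'I_n) (hi : (i.+1 < n)%N) (k l : 'I_n) : Pat k l -> T i l = false ->
  isint (cvec R c i k 0 - cs R c' (T i) l).
Proof.
move=> hP hT.
have [s [t [Ef [hTs [_ ht]]]]] := T_inv hi.
have hsq : aff_mul (ai i) (ai i) = transl (cvec R c i + cvec R c i).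
  by rewrite ai_eq /aff_mul /transl /= Cvec_fix Cmat_dmat dmat_sq.
have hint : forall m, isint ((cvec R c i + cvec R c i) m 0).
  by move=> m; rewrite mxE (_ : forall x : R, x + x = 2 * x) ?cvec2 // => x; ring.
have [_ fv] := fT hint.
have := fM (Kai hi) (Kai hi); rewrite hsq fv Ef /aff_mul /transl /= => [[_ e]].
have := congr1 (fun v : 'cV[R]_n => v l 0) e; rewrite mxDE dmatE -(hTs l) hT /sg mul1r.
have [k0 [hP0 [hpm hz]]] := row l.
have ek : k0 = k := Pat_uniq hP0 hP; subst k0.
rewrite mxE (bigD1 k) //= big1 ?addr0; last first.
  by move=> k' hk'; rewrite mxE hz // mul0r.
rewrite [W l k]mxE mxDE => e2.
have := ht l; rewrite -(@cs_ext R n c' (T i) s l hTs).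
case: hpm => hw; rewrite hw in e2.
  by have -> : t l 0 = cvec R c i k 0 by lra.
have -> : t l 0 = - cvec R c i k 0 by lra.
move=> h; have -> : cvec R c i k 0 - cs R c' (T i) l =
   (- cvec R c i k 0 - cs R c' (T i) l) + 2 * cvec R c i k 0 by ring.
by apply: rpredD => //; exact: cvec2.
Qed.

Lemma Pat_step (l : 'I_n) : (forall l' : 'I_n, (l < l')%N -> Pat l' l') -> Pat l l.
Proof.
move=> IH; case hl: (l.+1 < n)%N; last first.
  move=> j hj; have [s [t [_ [hTs [hs _]]]]] := T_inv hj; rewrite hTs.
  case hsl: (s l); first by move: (hs l hsl); rewrite hl.
  by apply/esym/negbTE/eqP => hjl; move: hj; rewrite hjl hl.
pose l1 := Ordinal hl.
have hP1 : Pat l1 l1 := IH l1 (ltnSn l).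
have hT1 : T l l1 = false.
  rewrite (hP1 l hl); apply/negbTE; rewrite -val_eqE /=.
  by rewrite eqn_leq [(l.+1 <= l)%N]ltnn andbF.
have hsq := SQ hl hP1 hT1.
have hcv : cvec R c l l1 0 = 2^-1 by rewrite mxE /= eqxx.
have hcs : cs R c' (T l) l1 = (T l l)%:R * 2^-1.
  rewrite /cs (bigD1 l) //= big1 ?addr0; first by rewrite mxE /= eqxx.
  move=> m hm; case hTm: (T l m); last by rewrite mul0r.
  rewrite mxE /=; case: eqP => [/eqP|_].
    by rewrite eqSS => /eqP/val_inj hml; move: hm; rewrite hml eqxx.
  case: ifP => [hlm|_]; last by rewrite mulr0.
  exfalso; have := IH m (ltnW hlm) l hl; rewrite hTm => /esym/eqP hlm'.
  by move: hlm; rewrite -hlm' /= ltnNge leqnSn.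
have hTll : T l l = true.
  case E: (T l l) => //; exfalso; move: hsq; rewrite hcv hcs E mul0r subr0.
  exact: half_not_int.
have [k [hPk _]] := row l.
have := hPk l hl; rewrite hTll => /esym/eqP hlk.
by move: hPk; rewrite -hlk.
Qed.

Lemma Pat_all (l : 'I_n) : Pat l l.
Proof.
suff H : forall d (l : 'I_n), (n - l <= d)%N -> Pat l l by apply: (H n); rewrite leq_subr.
elim=> [|d IH] l' hd.
  by exfalso; have := ltn_ord l'; lia.
apply: Pat_step => l'' hl''; apply: IH.
have := ltn_ord l''; have := ltn_ord l'; lia.
Qed.

Lemma c_eq : c = c'.
Proof.
apply/ffunP => -[[k i] hp]; have /andP [hki hin] := hp.
have hPk := Pat_all k.
have hTik : T i k = false.
  rewrite (hPk i hin); apply/negbTE/eqP => h; move: hki; rewrite h ltnn //.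
have := SQ hin hPk hTik.
have hcs : cs R c' (T i) k = cvec R c' i k 0.
  rewrite /cs (bigD1 i) //= big1 ?addr0.
    by rewrite (@Pat_all i i hin) eqxx mul1r.
  by move=> m hm; rewrite (@Pat_all m i hin) eq_sym (negbTE hm) mul0r.
rewrite hcs !mxE.
have hk1 : (k == i.+1 :> nat) = false.
  by apply/negbTE; rewrite neq_ltn (ltn_trans hki (ltnSn i)).
rewrite hk1 hki /cval (insubT (@idx_ok n) hp) /=.
case: (c _); case: (c' _); rewrite ?subrr ?sub0r ?subr0 // => h; exfalso.
  exact: half_not_int h.
exact: mhalf_not_int h.
Qed.

End NonIso.

Local Close Scope ring_scope.

Theorem corollary4p5 (R : realType) (n : nat) (hn : (2 <= n)%N) :
  #|{: Param n}| = 2 ^ ((n.-1 * n.-2) %/ 2) /\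
  (forall c : Param n, Bieberbach (@Kgroup R n c)) /\
  (forall c c' : Param n, c != c' -> ~ isomorphic (@Kgroup R n c) (@Kgroup R n c')).
Proof.
split; first exact: card_param.
split.
  move=> c; split; first exact: K_isometry.
  split; first exact: K_discrete.
  split; first exact: K_cocompact.
  exact: K_torsion_free.
move=> c c' hne [f [h1 [h2 [h3 h4]]]]; move/eqP: hne; apply.
exact: (c_eq h1 h2 h3 h4).
Qed.
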